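(* Let $c>0$, $k>0$, and $s,t\in\mathbb{R}$. Consider the function $$\gamma_1(x)=\frac{L'+M'\cos(s+x)}{N'+P'\cos(t+x)},\qquad x\in\mathbb{R},$$ with $L'=2$, $M'=2$, $N'=1+k^2+c$, $P'=2k$ (this corresponds to $\gamma_1(x)=\frac{P_0|a_1e^{jx}+h|^2}{P_1|b_1e^{jx}+g|^2+c}$ with $|a_1|=|b_1|=|h|=1$, $P_0=P_1=1$, $|g|=k$, $s=\angle a_1-\angle h$, $t=\angle b_1-\angle g$). Let $C'=(L'P')^2+(M'N')^2-2L'M'N'P'\cos(s-t)$ and let $\gamma_{\max}\ge\gamma_{\min}$ be the two values $$\frac{L'}{N'}-\frac{1}{N'}\,\frac{C'}{P'\bigl(L'P'-M'N'\cos(s-t)\bigr)\pm N'\sqrt{C'-\bigl(M'P'\sin(s-t)\bigr)^2}}$$ (the SINR values at the stationary points of $\gamma_1$). Let $\gamma_2=\gamma_1(-s)=\frac{L'+M'}{N'+P'\cos(s-t)}$ be the value at the signal-alignment choice $x=-s$. Then $$\gamma_{\max}-\gamma_2=g_1(k)=\frac{16k^2\sin^2(s-t)}{(k^2+2k\cos(s-t)+1+c)\bigl((k+1)^2+c\bigr)\bigl((k-1)^2+c\bigr)},$$ $$\gamma_2-\gamma_{\min}=g_2(k)=\frac{4}{k^2+2k\cos(s-t)+1+c}.$$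
   Context: $\angle z$ denotes the argument of a complex number $z$. The signal-alignment (SA) solution chooses the phase $x$ so that the reflected signal $a_1e^{jx}$ is phase-aligned with the direct signal $h$, i.e. $x=-s$. *)

(* Defs.v *)
From Stdlib Require Import Reals.
Open Scope R_scope.

Definition Lp : R := 2.
Definition Mp : R := 2.
Definition Np (c k : R) : R := 1 + k ^ 2 + c.
Definition Pp (k : R) : R := 2 * k.

Definition gamma1 (c k s t x : R) : R :=
  (Lp + Mp * cos (s + x)) / (Np c k + Pp k * cos (t + x)).

Definition Cp (c k s t : R) : R :=
  (Lp * Pp k) ^ 2 + (Mp * Np c k) ^ 2
  - 2 * Lp * Mp * Np c k * Pp k * cos (s - t).

Definition gamma_stat (plus : bool) (c k s t : R) : R :=
  let sq := sqrt (Cp c k s t - (Mp * Pp k * sin (s - t)) ^ 2) in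
  let den := Pp k * (Lp * Pp k - Mp * Np c k * cos (s - t))
             + (if plus then 1 else -1) * Np c k * sq in
  Lp / Np c k - (1 / Np c k) * (Cp c k s t / den).

Definition gamma_max (c k s t : R) : R :=
  Rmax (gamma_stat true c k s t) (gamma_stat false c k s t).
Definition gamma_min (c k s t : R) : R :=
  Rmin (gamma_stat true c k s t) (gamma_stat false c k s t).

(* Main.v *)
Require Import Defs.
From Stdlib Require Import Reals Lra Psatz.
Open Scope R_scope.

Theorem corollary1 (c k s t : R) (hc : 0 < c) (hk : 0 < k) :
  gamma_max c k s t - gamma1 c k s t (- s)
    = 16 * k ^ 2 * (sin (s - t)) ^ 2
      / ((k ^ 2 + 2 * k * cos (s - t) + 1 + c)
         * ((k + 1) ^ 2 + c) * ((k - 1) ^ 2 + c))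
  /\ gamma1 c k s t (- s) - gamma_min c k s t
    = 4 / (k ^ 2 + 2 * k * cos (s - t) + 1 + c).
Proof.
  assert (Hg2 : gamma1 c k s t (- s) = 4 / (k ^ 2 + 2 * k * cos (s - t) + 1 + c)).
  { unfold gamma1, Lp, Mp, Np, Pp.
    replace (s + - s) with 0 by ring. replace (t + - s) with (- (s - t)) by ring.
    rewrite cos_0, cos_neg. f_equal; ring. }
  rewrite Hg2.
  destruct (COS_bound (s - t)) as [Hu1 Hu2].
  assert (Hsc : sin (s - t) ^ 2 = 1 - cos (s - t) ^ 2).
  { pose proof (sin2_cos2 (s - t)) as Hh. unfold Rsqr in Hh. nra. }
  set (u := cos (s - t)) in *. set (v := sin (s - t)) in *.
  set (N := 1 + k ^ 2 + c).
  assert (HN : N - 2 * k * u > 0) by (unfold N; assert (0 <= k * (1 - u)) by (apply Rmult_le_pos; lra); pose proof (pow2_ge_0 (k - 1)); nra).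
  assert (HN2 : N - 2 * k > 0) by (unfold N; pose proof (pow2_ge_0 (k - 1)); nra).
  assert (HN3 : N + 2 * k > 0) by (unfold N; pose proof (pow2_ge_0 (k + 1)); nra).
  assert (Hsq : sqrt (Cp c k s t - (Mp * Pp k * v) ^ 2) = 2 * (N - 2 * k * u)).
  { replace (Cp c k s t - (Mp * Pp k * v) ^ 2) with ((2 * (N - 2 * k * u)) ^ 2).
    - apply sqrt_pow2. lra.
    - unfold Cp, Mp, Pp, Lp, Np. fold u. fold N.
      assert (E: forall a, (a*v)^2 = a^2*(1-u^2)) by (intro; rewrite Rpow_mult_distr, Hsc; ring).
      rewrite E. ring. }
  assert (HQ : 4 * k ^ 2 - 4 * k * N * u + N ^ 2 > 0).
  { replace (4 * k ^ 2 - 4 * k * N * u + N ^ 2) with ((N - 2*k*u)^2 + 4*k^2*(1 - u^2)) by ring.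
    pose proof (pow2_ge_0 (N - 2*k*u)). assert (0 <= k^2*(1-u^2)). { apply Rmult_le_pos. apply pow2_ge_0. nra. } nra. }
  assert (HNp : N > 0) by lra.
  assert (HD : N ^ 2 - 4 * k ^ 2 > 0).
  { replace (N ^ 2 - 4 * k ^ 2) with ((N - 2*k)*(N+2*k)) by ring. apply Rmult_lt_0_compat; lra. }
  assert (Hplus : gamma_stat true c k s t = 0).
  { unfold gamma_stat. fold v. rewrite Hsq. unfold Cp, Lp, Mp, Pp, Np. fold u N.
    field. repeat split; try lra. }
  assert (Hminus : gamma_stat false c k s t =
     2 / N + 2 * (4 * k ^ 2 + N ^ 2 - 4 * N * k * u) / (N * (N ^ 2 - 4 * k ^ 2))).
  { unfold gamma_stat. fold v. rewrite Hsq. unfold Cp, Lp, Mp, Pp, Np. fold u N.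
    field. repeat split; try lra. }
  assert (Hpos : gamma_stat false c k s t > 0).
  { rewrite Hminus.
    apply Rplus_lt_le_0_compat.
    - apply Rdiv_lt_0_compat; lra.
    - left. apply Rdiv_lt_0_compat; [nra| apply Rmult_lt_0_compat; lra]. }
  unfold gamma_max, gamma_min. rewrite Rmax_right, Rmin_left by lra.
  split.
  - assert (HP : N + 2 * k * u > 0).
    { replace (N + 2*k*u) with ((N - 2*k) + 2*k*(1+u)) by ring.
      assert (0 <= k*(1+u)) by (apply Rmult_le_pos; lra). lra. }
    replace (k ^ 2 + 2 * k * u + 1 + c) with (N + 2*k*u) by (unfold N; ring).
    replace ((k + 1) ^ 2 + c) with (N + 2*k) by (unfold N; ring).
    replace ((k - 1) ^ 2 + c) with (N - 2*k) by (unfold N; ring).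
    rewrite Hminus. rewrite Hsc.
    field. repeat split; lra.
  - rewrite Hplus. unfold Rminus. rewrite Ropp_0, Rplus_0_r. reflexivity.
Qed.
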